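(* Let $N\in\mathbb{N}$, $a\in\{1,\dots,N\}$, and $\varepsilon,p,q,C\in\mathbb{R}$ with $\varepsilon>0$, $p>1$, $C>0$. Let $(M_k)_{k\ge0}$ be real numbers with $|M_k|<\dfrac{C\log^q(Nk+N+a)}{k^p+\varepsilon}$ for all $k\in\mathbb{N}_0$. Then $$\lim_{n\to\infty}\sum_{k=0}^n|M_k|\frac{N\left[\left(\frac{a}{N}\right)_{n+1}\right]^2}{(n-k)!\left(\frac{2a}{N}\right)_{n+k+1}}=\frac{N}{B\left(\frac{a}{N},\frac{a}{N}\right)}\sum_{k=0}^\infty|M_k|.$$
   Context: $(x)_m$ is the Pochhammer symbol and $B(x,y)=\Gamma(x)\Gamma(y)/\Gamma(x+y)$ is the Beta function. *)

(* Defs.v *)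
From Stdlib Require Import Reals Factorial.
From Coquelicot Require Import Coquelicot.
Open Scope R_scope.

Fixpoint poch (x : R) (m : nat) : R :=
  match m with
  | O => 1
  | S m' => poch x m' * (x + INR m')
  end.

Definition Gamma (x : R) : R :=
  RInt_gen (fun t => Rpower t (x - 1) * exp (- t))
           (at_right 0) (Rbar_locally p_infty).

Definition Beta (x y : R) : R := Gamma x * Gamma y / Gamma (x + y).

Definition natpow (k : nat) (p : R) : R :=
  match k with O => 0 | _ => Rpower (INR k) p end.

(* Main.v *)
Require Import Defs.
From Stdlib Require Import Reals Factorial.
From Coquelicot Require Import Coquelicot.
From Stdlib Require Import Lra Lia.
Open Scope R_scope.


Lemma Rpower_gt0 x e : 0 < Rpower x e.
Proof. unfold Rpower; apply exp_pos. Qed.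

Lemma derRpow e t : 0 < t -> is_derive (fun u => Rpower u e) t (e * Rpower t (e-1)).
Proof. intros; apply is_derive_Reals, derivable_pt_lim_power; auto. Qed.

Lemma exRpow e t : 0 < t -> ex_derive (fun u => Rpower u e) t.
Proof. intros; eexists; apply derRpow; auto. Qed.

Lemma DRpow e t : 0 < t -> Derive (fun u => Rpower u e) t = e * Rpower t (e-1).
Proof. intros; apply is_derive_unique, derRpow; auto. Qed.

Lemma contRpow e t : 0 < t -> continuous (fun u => Rpower u e) t.
Proof. intros; apply (@ex_derive_continuous R_AbsRing R_NormedModule), exRpow; auto. Qed.

Lemma Rpower_le1 t e : 0 < t -> t <= 1 -> 0 <= e -> Rpower t e <= 1.
Proof. intros. unfold Rpower. rewrite <- exp_0. apply exp_le_3 || idtac.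
  assert (ln t <= 0) by (rewrite <- ln_1; apply ln_le; lra).
  destruct (Req_dec (e * ln t) 0). rewrite H3; lra. left; apply exp_increasing; nra.
Qed.

Lemma Rpower_1_base e : Rpower 1 e = 1.
Proof. unfold Rpower; rewrite ln_1, Rmult_0_r, exp_0; auto. Qed.

Lemma exp_pow_nat x n : exp x ^ n = exp (INR n * x).
Proof. induction n. simpl; rewrite Rmult_0_l, exp_0; auto.
  rewrite S_INR; simpl pow; rewrite IHn, <- exp_plus; f_equal; ring. Qed.

Lemma one_plus_le_exp x : 1 + x <= exp x.
Proof. destruct (Req_dec x 0). subst; rewrite exp_0; lra. left; apply exp_ineq1; auto. Qed.

Lemma bernoulli h n : -1 <= h -> 1 + INR n * h <= (1+h)^n.
Proof. intros Hh. induction n. simpl; lra.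
  rewrite S_INR; simpl pow.
  assert (0 <= 1 + h) by lra.
  apply Rle_trans with ((1+h)*(1 + INR n * h)).
  - assert (0 <= INR n * h * h). { rewrite Rmult_assoc. apply Rmult_le_pos. apply pos_INR. nra. } nra.
  - apply Rmult_le_compat_l; auto.
Qed.

Lemma ineqE1 n t : (1 <= n)%nat -> 0 <= t <= INR n -> 0 <= (1 - t/INR n)^n <= exp (-t).
Proof. intros Hn Ht. assert (Hc: 0 < INR n) by (apply lt_0_INR; lia).
  assert (0 <= 1 - t/INR n). { assert (t/INR n <= 1). apply Rmult_le_reg_r with (INR n); auto.
    unfold Rdiv; rewrite Rmult_assoc, Rinv_l; lra. lra. }
  split. apply pow_le; auto.
  replace (exp (-t)) with (exp (- t / INR n) ^ n).
  apply pow_incr; split; auto. pose proof (one_plus_le_exp (- t / INR n)). unfold Rdiv in *; lra.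
  rewrite exp_pow_nat; f_equal; field; lra.
Qed.

Lemma ineqE2 n t : (1 <= n)%nat -> 0 <= t <= INR n ->
  exp (-t) - (1 - t/INR n)^n <= t^2 * exp (-t) / INR n.
Proof. intros Hn Ht. assert (Hc: 0 < INR n) by (apply lt_0_INR; lia).
  set (c := INR n) in *.
  assert (H1 : (1 + t/c)^n <= exp t).
  { replace (exp t) with (exp (t/c)^n). apply pow_incr. split.
    assert (0 <= t/c) by (apply Rdiv_le_0_compat; lra). lra. apply one_plus_le_exp.
    rewrite exp_pow_nat; f_equal; unfold c in *; field; lra. }
  assert (H2 : 1 - t^2/c <= (1 - t/c)^n * (1 + t/c)^n).
  { rewrite <- Rpow_mult_distr. replace ((1 - t/c)*(1+t/c)) with (1 + (- (t^2/c^2))) by (field; lra).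
    replace (t^2/c) with (INR n * (t^2/c^2)) by (unfold c in *; field; lra).
    replace (1 - INR n * (t ^ 2 / c ^ 2)) with (1 + INR n * (-(t^2/c^2))) by ring.
    apply bernoulli. assert (t^2/c^2 <= 1). { apply Rmult_le_reg_r with (c^2). nra. field_simplify; nra. } lra. }
  pose proof (ineqE1 n t Hn Ht) as [H3 H4]. fold c in H3.
  assert (He : 0 < exp (-t)) by apply exp_pos.
  assert (Hee : exp (-t) * exp t = 1) by (rewrite <- exp_plus; replace (-t+t) with 0 by ring; apply exp_0).
  assert (0 <= (1+t/c)^n). { apply pow_le. assert (0 <= t/c) by (apply Rdiv_le_0_compat; lra). lra. }
  assert (H5 : exp (-t) * (1 - t^2/c) <= (1 - t/c)^n).
  { destruct (Rle_dec 0 (1 - t^2/c)).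
    - apply Rle_trans with (exp (-t) * ((1 - t/c)^n * (1+t/c)^n)). apply Rmult_le_compat_l; lra.
      apply Rle_trans with (exp (-t) * ((1 - t/c)^n * exp t)).
      apply Rmult_le_compat_l. lra. apply Rmult_le_compat_l; lra. nra.
    - nra. }
  unfold Rdiv in *. nra.
Qed.

Fixpoint G (c : R) (m : nat) (y t : R) : R :=
 match m with O => Rpower t y / y
 | S m' => Rpower t y * (1 - t/c)^(S m') / y + INR (S m') / (c*y) * G c m' (y+1) t end.

Lemma G_deriv m : forall c y t, 0 < c -> 0 < y -> 0 < t ->
  is_derive (G c m y) t (Rpower t (y-1) * (1 - t/c)^m).
Proof.
  induction m; intros c y t Hc Hy Ht.
  - cbn [G]. auto_derive. apply exRpow; auto.
    rewrite DRpow by auto. field. lra.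
  - cbn [G]. rewrite S_INR. auto_derive.
    split. apply exRpow; auto. split. eexists; apply IHm; auto; lra. auto.
    rewrite DRpow by auto.
    replace (Derive (fun x => G c m (y+1) x) t) with (Rpower t (y + 1 - 1) * (1 - t / c) ^ m)
      by (symmetry; apply is_derive_unique; apply IHm; auto; lra).
    replace (match m with 0%nat => 1 | S _ => INR m + 1 end) with (INR m + 1) by (destruct m; simpl; ring).
    replace (y + 1 - 1) with y by ring. simpl pow. replace (1 + - (t * / c)) with (1 - t/c) by reflexivity. set (u := 1 - t/c). set (w := Rpower t y). set (v:= Rpower t (y-1)). assert (w = v * t) by (unfold w, v; replace y with ((y-1)+1) at 1 by ring; rewrite Rpower_plus, Rpower_1; auto). rewrite H. field. lra.
Qed.

Lemma poch_pos y k : 0 < y -> 0 < poch y k.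
Proof. intros Hy; induction k; simpl. lra. apply Rmult_lt_0_compat; auto.
  pose proof (pos_INR k); lra. Qed.

Lemma poch_shift y k : poch y (S k) = y * poch (y+1) k.
Proof. induction k. simpl; ring. 
  change (poch y (S (S k))) with (poch y (S k) * (y + INR (S k))).
  rewrite IHk. change (poch (y+1) (S k)) with (poch (y+1) k * (y + 1 + INR k)). rewrite S_INR. ring. Qed.

Lemma G_at_c m : forall c y, 0 < c -> 0 < y ->
  G c m y c = INR (fact m) * Rpower c y / poch y (S m).
Proof.
  induction m; intros c y Hc Hy.
  - simpl. field. lra.
  - cbn [G]. rewrite IHm by lra.
    replace (1 - c/c) with 0 by (field; lra). rewrite pow_i by lia.
    rewrite (poch_shift y (S m)). rewrite Rpower_plus, Rpower_1 by auto.
    rewrite fact_simpl, mult_INR.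
    pose proof (poch_pos (y+1) (S m) ltac:(lra)). field. split; lra.
Qed.

Lemma G_bound m : forall c y, 0 < c -> 0 < y -> exists K, 0 <= K /\
  forall t, 0 < t -> t <= 1 -> t <= c -> 0 <= G c m y t <= K * Rpower t y.
Proof.
  induction m; intros c y Hc Hy.
  - exists (/y). split. left; apply Rinv_0_lt_compat; auto.
    intros t H1 H2 H3. simpl. pose proof (Rpower_gt0 t y). split.
    apply Rdiv_le_0_compat; lra. unfold Rdiv; lra.
  - destruct (IHm c (y+1) Hc ltac:(lra)) as [K [HK HK2]].
    exists (/y + INR (S m)/(c*y) * K). split.
    { assert (0 <= INR (S m)/(c*y)) by (apply Rdiv_le_0_compat; [apply pos_INR| nra]).
      pose proof (Rinv_0_lt_compat y Hy). nra. }
    intros t H1 H2 H3. cbn [G]. destruct (HK2 t H1 H2 H3) as [G1 G2].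
    assert (0 <= 1 - t/c <= 1). { split. assert (t/c <= 1). apply Rmult_le_reg_r with c; auto.
      unfold Rdiv; rewrite Rmult_assoc, Rinv_l; lra. lra.
      assert (0 <= t/c) by (apply Rdiv_le_0_compat; lra). lra. }
    assert (0 <= (1 - t/c)^(S m) <= 1). { split. apply pow_le; lra. apply pow_le1 || idtac.
      replace 1 with (1^(S m)) at 2 by apply pow1. apply pow_incr; lra. }
    assert (Hq : 0 <= INR (S m)/(c*y)) by (apply Rdiv_le_0_compat; [apply pos_INR| nra]).
    pose proof (Rpower_gt0 t y) as Pt.
    assert (Rpower t (y+1) <= Rpower t y). { rewrite Rpower_plus, Rpower_1 by auto. nra. }
    assert (Hiy : 0 < /y) by (apply Rinv_0_lt_compat; auto).
    split.
    + apply Rplus_le_le_0_compat. unfold Rdiv; apply Rmult_le_pos; [nra|lra].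
      apply Rmult_le_pos; auto.
    + unfold Rdiv at 1. 
      assert (Rpower t y * (1 - t / c) ^ S m * / y <= / y * Rpower t y). { assert (0 <= Rpower t y * / y) by nra. nra. }
      assert (INR (S m) / (c * y) * G c m (y + 1) t <= INR (S m) / (c * y) * K * Rpower t y).
      { rewrite Rmult_assoc. apply Rmult_le_compat_l; auto. nra. }
      nra.
Qed.

Definition gI (y t : R) := Rpower t (y - 1) * exp (- t).
Definition hI (c : R) (n : nat) (y t : R) := Rpower t (y - 1) * (1 - t/c)^n.

Ltac contac := apply (@ex_derive_continuous R_AbsRing R_NormedModule); auto_derive;
  repeat split; try (apply exRpow; lra); auto.

Lemma cont_g y t : 0 < t -> continuous (gI y) t.
Proof. intros; unfold gI; contac. Qed.
Lemma cont_h c n y t : 0 < t -> continuous (hI c n y) t.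
Proof. intros; unfold hI; contac. Qed.

Lemma ex_g y a b : 0 < a -> 0 < b -> ex_RInt (gI y) a b.
Proof. intros; apply (@ex_RInt_continuous R_CompleteNormedModule); intros z Hz; apply cont_g.
  assert (0 < Rmin a b) by (apply Rmin_pos; auto). lra. Qed.
Lemma ex_h c n y a b : 0 < a -> 0 < b -> ex_RInt (hI c n y) a b.
Proof. intros; apply (@ex_RInt_continuous R_CompleteNormedModule); intros z Hz; apply cont_h.
  assert (0 < Rmin a b) by (apply Rmin_pos; auto). lra. Qed.

Lemma RInt_h c n y a b : 0 < c -> 0 < y -> 0 < a -> 0 < b ->
  RInt (hI c n y) a b = G c n y b - G c n y a.
Proof. intros. apply is_RInt_unique.
  replace (G c n y b - G c n y a) with (minus (G c n y b) (G c n y a)) by reflexivity.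
  apply (@is_RInt_derive R_CompleteNormedModule (G c n y)).
  - intros z Hz. assert (0 < Rmin a b) by (apply Rmin_pos; auto). apply G_deriv; auto; lra.
  - intros z Hz. assert (0 < Rmin a b) by (apply Rmin_pos; auto). apply cont_h; lra.
Qed.

Lemma RInt_pw y a b : 0 < y -> 0 < a -> 0 < b ->
  RInt (fun t => Rpower t (y-1)) a b = (Rpower b y - Rpower a y) / y.
Proof. intros. apply is_RInt_unique.
  replace ((Rpower b y - Rpower a y) / y) with (minus (Rpower b y / y) (Rpower a y / y))
    by (unfold minus, plus, opp; simpl; field; lra).
  apply (@is_RInt_derive R_CompleteNormedModule (fun t => Rpower t y / y)).
  - intros z Hz. assert (0 < Rmin a b) by (apply Rmin_pos; auto).
    auto_derive. apply exRpow; lra. rewrite DRpow by lra. field; lra.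
  - intros z Hz. assert (0 < Rmin a b) by (apply Rmin_pos; auto). contac.
Qed.

Lemma ex_pw y a b : 0 < a -> 0 < b -> ex_RInt (fun t => Rpower t (y-1)) a b.
Proof. intros; apply (@ex_RInt_continuous R_CompleteNormedModule); intros z Hz.
  assert (0 < Rmin a b) by (apply Rmin_pos; auto). contac. Qed.

Lemma G_upper n c y a : 0 < c -> 0 < y -> 0 < a -> a <= c -> 0 <= G c n y a <= Rpower a y / y.
Proof.
  intros Hc Hy Ha Hac.
  destruct (G_bound n c y Hc Hy) as [K [HK HKb]].
  split.
  { destruct (Rle_dec a 1). apply (HKb a); auto. 
    assert (G c n y a = G c n y 1 + RInt (hI c n y) 1 a) by (rewrite RInt_h; lra).
    rewrite H. apply Rplus_le_le_0_compat. apply (HKb 1); lra.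
    apply RInt_ge_0. lra. apply ex_h; lra. intros z Hz. unfold hI.
    apply Rmult_le_pos. left; apply Rpower_gt0. apply pow_le.
    assert (z/c <= 1). apply Rmult_le_reg_r with c; auto.
    unfold Rdiv; rewrite Rmult_assoc, Rinv_l; lra. lra. }
  apply Rle_plus_epsilon. intros eps Heps.
  set (a0 := Rpower (eps/(K+1)) (/y)).
  set (a' := Rmin (Rmin a 1) a0).
  assert (Ha0 : 0 < a0) by apply Rpower_gt0.
  assert (Ha' : 0 < a') by (unfold a'; repeat apply Rmin_pos; lra).
  assert (Ha'1 : a' <= a /\ a' <= 1 /\ a' <= a0).
  { unfold a'. pose proof (Rmin_l (Rmin a 1) a0). pose proof (Rmin_r (Rmin a 1) a0).
    pose proof (Rmin_l a 1). pose proof (Rmin_r a 1). lra. }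
  assert (Hp : Rpower a' y <= eps/(K+1)).
  { apply Rle_trans with (Rpower a0 y). apply Rle_Rpower_l; lra.
    unfold a0. rewrite Rpower_mult. replace (/y * y) with 1 by (field; lra).
    apply Req_le, Rpower_1. apply Rdiv_lt_0_compat; lra. }
  assert (Hsplit : G c n y a = G c n y a' + RInt (hI c n y) a' a) by (rewrite RInt_h; lra).
  assert (Hle : RInt (hI c n y) a' a <= RInt (fun t => Rpower t (y-1)) a' a).
  { apply RInt_le. lra. apply ex_h; lra. apply ex_pw; lra.
    intros z Hz. unfold hI. assert (0 < Rpower z (y-1)) by apply Rpower_gt0.
    assert (0 <= 1 - z/c <= 1). { split. assert (z/c <= 1). apply Rmult_le_reg_r with c; auto.
      unfold Rdiv; rewrite Rmult_assoc, Rinv_l; lra. lra.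
      assert (0 <= z/c) by (apply Rdiv_le_0_compat; lra). lra. }
    assert ((1 - z/c)^n <= 1). { replace 1 with (1^n) at 2 by apply pow1. apply pow_incr; lra. }
    nra. }
  rewrite RInt_pw in Hle by lra.
  destruct (HKb a' Ha' (proj1 (proj2 Ha'1)) ltac:(lra)) as [_ HG].
  assert (K * Rpower a' y <= eps).
  { apply Rle_trans with (K * (eps/(K+1))). apply Rmult_le_compat_l; auto.
    apply Rmult_le_reg_r with (K+1). lra. replace (K * (eps / (K + 1)) * (K + 1)) with (K*eps) by (field; lra). nra. }
  pose proof (Rpower_gt0 a' y).
  assert (Rpower a' y / y > 0) by (apply Rdiv_lt_0_compat; lra).
  unfold Rdiv in *. lra.
Qed.

Lemma le_div_of X D u : 0 < u -> X * u <= D -> X <= D / u.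
Proof. intros. apply Rmult_le_reg_r with u; auto. unfold Rdiv; rewrite Rmult_assoc, Rinv_l; lra. Qed.

Lemma exp_ge_pow t m : 0 < t -> (0 < m)%nat -> (t / INR m)^m <= exp t.
Proof. intros Ht Hm. assert (0 < INR m) by (apply lt_0_INR; auto).
  assert (0 <= t/INR m) by (apply Rdiv_le_0_compat; lra).
  apply Rle_trans with ((1 + t/INR m)^m). apply pow_incr; lra.
  replace (exp t) with (exp (t / INR m) ^ m). apply pow_incr. split. lra. apply one_plus_le_exp.
  rewrite exp_pow_nat; f_equal; field; lra. Qed.

Lemma Dbound y : 0 < y -> exists D, 0 < D /\
  (forall t, 0 < t -> Rpower t (y+1) * exp (-t) <= D / (1+t)^2) /\
  (forall t, 1 <= t -> gI y t <= D / (1+t)^2).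
Proof.
  intros Hy. destruct (INR_archimed 1 (y+3)) as [m Hm]; [lra|]. rewrite Rmult_1_r in Hm.
  assert (Hm0 : (0 < m)%nat). { destruct m. simpl in Hm; lra. lia. }
  assert (HmR : 0 < INR m) by (apply lt_0_INR; auto).
  assert (Hmm : 1 <= INR m ^ m). { apply pow_R1_Rle. apply (le_INR 1) in Hm0. simpl in Hm0. lra. }
  assert (Hmain : forall t, 0 < t -> Rpower t (y+1) * exp (-t) <= 4 * INR m ^ m / (1+t)^2).
  { intros t Ht. apply le_div_of. nra.
    pose proof (exp_pos (-t)). pose proof (Rpower_gt0 t (y+1)).
    destruct (Rle_dec t 1).
    - assert (Rpower t (y+1) <= 1) by (apply Rpower_le1; lra).
      assert (exp (-t) <= 1) by (rewrite <- exp_0; apply exp_le_3 || (destruct (Req_dec t 0); [lra| left; apply exp_increasing; lra])).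
      assert ((1+t)^2 <= 4) by nra.
      assert (Rpower t (y+1) * exp (-t) <= 1) by nra.
      nra.
    - assert (H1 : Rpower t (y+1) * t^2 <= t ^ m).
      { rewrite <- (Rpower_pow 2) by lra. rewrite <- Rpower_plus. rewrite <- Rpower_pow by lra.
        apply Rle_Rpower. lra. simpl. lra. }
      assert (H2 : t ^ m * exp (-t) <= INR m ^ m).
      { pose proof (exp_ge_pow t m Ht Hm0) as Hq. unfold Rdiv in Hq; rewrite Rpow_mult_distr in Hq.
        assert (Hee : exp t * exp (-t) = 1) by (rewrite <- exp_plus; replace (t + -t) with 0 by ring; apply exp_0).
        assert (0 < / INR m ^ m) by (apply Rinv_0_lt_compat, pow_lt; auto).
        rewrite pow_inv in Hq.
        apply Rmult_le_compat_r with (r := exp (-t) * INR m ^ m) in Hq; [|nra].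
        replace (t ^ m * / INR m ^ m * (exp (- t) * INR m ^ m)) with (t^m * exp (-t)) in Hq by (field; lra).
        replace (exp t * (exp (- t) * INR m ^ m)) with (INR m ^ m) in Hq by (rewrite <- Rmult_assoc, Hee; ring).
        auto. }
      assert ((1+t)^2 <= 4 * t^2) by nra.
      assert (0 < Rpower t (y+1) * exp (-t)) by nra.
      apply Rle_trans with (Rpower t (y + 1) * exp (- t) * (4 * t^2)). apply Rmult_le_compat_l; lra.
      replace (Rpower t (y + 1) * exp (- t) * (4 * t ^ 2)) with (4 * ((Rpower t (y+1) * t^2) * exp (-t))) by ring.
      assert ((Rpower t (y+1) * t^2) * exp (-t) <= t^m * exp (-t)) by (apply Rmult_le_compat_r; lra).
      lra. }
  exists (4 * INR m ^ m). split. lra. split. auto.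
  intros t Ht. apply Rle_trans with (Rpower t (y+1) * exp (-t)); [|apply Hmain; lra].
  unfold gI. apply Rmult_le_compat_r. left; apply exp_pos. apply Rle_Rpower; lra.
Qed.

Lemma RInt_inv2 K a b : 0 <= a -> 0 <= b -> RInt (fun t => K / (1+t)^2) a b = K/(1+a) - K/(1+b).
Proof. intros. apply is_RInt_unique.
  replace (K/(1+a) - K/(1+b)) with (minus (- K/(1+b)) (- K/(1+a))) by (unfold minus, plus, opp; simpl; field; lra).
  apply (@is_RInt_derive R_CompleteNormedModule (fun t => - K/(1+t))).
  - intros z Hz. assert (0 <= Rmin a b) by (apply Rmin_glb; auto).
    auto_derive. lra. field. lra.
  - intros z Hz. assert (0 <= Rmin a b) by (apply Rmin_glb; auto).
    apply (@ex_derive_continuous R_AbsRing R_NormedModule). auto_derive. nra.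
Qed.

Lemma ex_inv2 K a b : 0 <= a -> 0 <= b -> ex_RInt (fun t => K / (1+t)^2) a b.
Proof. intros. apply (@ex_RInt_continuous R_CompleteNormedModule). intros z Hz.
  assert (0 <= Rmin a b) by (apply Rmin_glb; auto).
  apply (@ex_derive_continuous R_AbsRing R_NormedModule). auto_derive. nra. Qed.

Definition P (y : R) (n : nat) := INR (fact n) * Rpower (INR n) y / poch y (S n).

Lemma approx y : 0 < y -> exists D, 0 < D /\ forall n a b, (1 <= n)%nat -> 0 < a -> a <= 1 -> 1 <= b -> b <= INR n ->
  Rabs (RInt (gI y) a b - P y n) <= Rpower a y / y + D/(1+b) + D / INR n.
Proof.
  intros Hy. destruct (Dbound y Hy) as [D [HD [HD1 HD2]]]. exists D. split; auto.
  intros n a b Hn Ha Ha1 Hb Hbn.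
  set (c := INR n) in *. assert (Hc : 0 < c) by (apply lt_0_INR; lia).
  assert (HP : P y n = G c n y c) by (unfold P; rewrite G_at_c; auto).
  assert (Hs1 : RInt (hI c n y) a b = G c n y b - G c n y a) by (apply RInt_h; lra).
  assert (Hs2 : RInt (hI c n y) b c = G c n y c - G c n y b) by (apply RInt_h; lra).
  pose proof (G_upper n c y a Hc Hy Ha ltac:(lra)) as [Ga1 Ga2].
  assert (Ht1 : 0 <= RInt (hI c n y) b c).
  { apply RInt_ge_0; auto. apply ex_h; lra. intros z Hz. unfold hI.
    apply Rmult_le_pos. left; apply Rpower_gt0. apply (ineqE1 n z); [lia|]. fold c; lra. }
  assert (Ht2 : RInt (hI c n y) b c <= D/(1+b)).
  { apply Rle_trans with (RInt (fun t => D/(1+t)^2) b c).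
    apply RInt_le; auto. apply ex_h; lra. apply ex_inv2; lra.
    intros z Hz. apply Rle_trans with (gI y z). unfold hI, gI. apply Rmult_le_compat_l.
    left; apply Rpower_gt0. apply (ineqE1 n z); [lia|]. fold c; lra. apply HD2; lra.
    rewrite RInt_inv2 by lra. assert (0 < D/(1+c)) by (apply Rdiv_lt_0_compat; lra). lra. }
  assert (Hd : RInt (gI y) a b - RInt (hI c n y) a b = RInt (fun t => gI y t - hI c n y t) a b).
  { symmetry. apply (RInt_minus (V:=R_CompleteNormedModule)). apply ex_g; lra. apply ex_h; lra. }
  assert (Hexd : ex_RInt (fun t => gI y t - hI c n y t) a b).
  { apply (ex_RInt_minus (V:=R_CompleteNormedModule)). apply ex_g; lra. apply ex_h; lra. }
  assert (Hd1 : 0 <= RInt (fun t => gI y t - hI c n y t) a b).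
  { apply RInt_ge_0; auto. lra. intros z Hz. unfold gI, hI.
    pose proof (Rpower_gt0 z (y-1)). pose proof (ineqE1 n z ltac:(lia) ltac:(fold c; lra)). fold c in H0. nra. }
  assert (Hd2 : RInt (fun t => gI y t - hI c n y t) a b <= D / c).
  { apply Rle_trans with (RInt (fun t => (D/c)/(1+t)^2) a b).
    apply RInt_le; auto. lra. apply ex_inv2; lra.
    intros z Hz. unfold gI, hI.
    pose proof (Rpower_gt0 z (y-1)). pose proof (ineqE2 n z ltac:(lia) ltac:(fold c; lra)). fold c in H0.
    assert (Rpower z (y-1) * (exp (-z) - (1 - z/c)^n) <= Rpower z (y-1) * (z ^ 2 * exp (- z) / c))
      by (apply Rmult_le_compat_l; lra).
    assert (Hr : Rpower z (y-1) * (z ^ 2 * exp (- z) / c) = (Rpower z (y+1) * exp (-z)) / c).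
    { replace (y+1) with ((y-1) + INR 2) by (simpl; ring). rewrite Rpower_plus, Rpower_pow by lra.
      field; lra. }
    pose proof (HD1 z ltac:(lra)).
    assert ((Rpower z (y+1) * exp (-z)) / c <= D/(1+z)^2 / c).
    { unfold Rdiv. apply Rmult_le_compat_r. left; apply Rinv_0_lt_compat; auto. fold (D / (1+z)^2). lra. }
    replace (D / c / (1 + z) ^ 2) with (D / (1 + z) ^ 2 / c) by (field; split; nra).
    lra.
    rewrite RInt_inv2 by lra. assert (0 < D/c/(1+b)) by (apply Rdiv_lt_0_compat; [apply Rdiv_lt_0_compat|]; lra).
    replace (D/c/(1+a)) with ((D/c) * /(1+a)) by reflexivity.
    assert (/(1+a) <= 1). { rewrite <- Rinv_1. apply Rinv_le_contravar; lra. }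
    assert (0 < D / c) by (apply Rdiv_lt_0_compat; lra). nra. }
  rewrite HP. unfold c in *.
  apply Rabs_le. split; lra.
Qed.

Lemma abs_le_iff u e : Rabs u <= e <-> -e <= u <= e.
Proof. unfold Rabs; destruct Rcase_abs; split; intros; lra. Qed.

Lemma choose_a y eps : 0 < y -> 0 < eps -> exists a, 0 < a <= 1 /\ Rpower a y / y < eps.
Proof. intros Hy He. set (a0 := Rpower (eps*y/2) (/y)). exists (Rmin 1 a0).
  assert (0 < a0) by apply Rpower_gt0.
  split. split. apply Rmin_pos; lra. apply Rmin_l.
  assert (Rpower (Rmin 1 a0) y <= eps * y / 2).
  { apply Rle_trans with (Rpower a0 y). apply Rle_Rpower_l. lra. split. apply Rmin_pos; lra. apply Rmin_r.
    unfold a0. rewrite Rpower_mult. replace (/y * y) with 1 by (field; lra). rewrite Rpower_1. lra.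
    apply Rmult_lt_0_compat; [nra|lra]. }
  apply Rmult_lt_reg_r with y; auto. unfold Rdiv. rewrite Rmult_assoc, Rinv_l by lra. nra.
Qed.

Lemma choose_b D eps : 0 < D -> 0 < eps -> exists b, 2 <= b /\ forall b', b <= b' -> D/(1+b') < eps.
Proof. intros HD He. exists (D/eps + 2). split. assert (0 < D/eps) by (apply Rdiv_lt_0_compat; lra). lra.
  intros b' Hb'. assert (0 < D/eps) by (apply Rdiv_lt_0_compat; lra).
  apply Rmult_lt_reg_r with (1+b'). lra. unfold Rdiv; rewrite Rmult_assoc, Rinv_l by lra.
  rewrite Rmult_1_r. assert (eps * (D/eps) = D) by (field; lra). nra.
Qed.

Lemma choose_n D eps r : 0 < D -> 0 < eps -> 0 <= r -> exists N : nat, (1 <= N)%nat /\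
  forall n, (N <= n)%nat -> r <= INR n /\ D / INR n < eps.
Proof. intros HD He Hr. destruct (INR_archimed 1 (r + D/eps + 1)) as [N HN]. lra.
  rewrite Rmult_1_r in HN. assert (0 < D/eps) by (apply Rdiv_lt_0_compat; lra).
  exists N. split. destruct N. simpl in HN; lra. lia.
  intros n Hn. apply le_INR in Hn. split. lra.
  apply Rmult_lt_reg_r with (INR n). lra. unfold Rdiv; rewrite Rmult_assoc, Rinv_l by lra.
  rewrite Rmult_1_r. assert (eps * (D/eps) = D) by (field; lra). nra.
Qed.

Lemma gamma_lim y : 0 < y -> is_lim_seq (P y) (Gamma y) /\ 0 < Gamma y.
Proof.
  intros Hy. destruct (approx y Hy) as [D [HD Happ]].
  assert (Hc : ex_lim_seq_cauchy (P y)).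
  { intros eps. pose proof (cond_pos eps) as He.
    destruct (choose_a y (eps/6) Hy ltac:(lra)) as [a [Ha1 Ha2]].
    destruct (choose_b D (eps/6) HD ltac:(lra)) as [b [Hb1 Hb2]].
    destruct (choose_n D (eps/6) b HD ltac:(lra) ltac:(lra)) as [N [HN1 HN2]].
    exists N. intros n m Hn Hm.
    destruct (HN2 n Hn) as [Hn1 Hn2]. destruct (HN2 m Hm) as [Hm1 Hm2].
    pose proof (Happ n a b ltac:(lia) ltac:(lra) ltac:(lra) ltac:(lra) Hn1) as E1.
    pose proof (Happ m a b ltac:(lia) ltac:(lra) ltac:(lra) ltac:(lra) Hm1) as E2.
    apply abs_le_iff in E1. apply abs_le_iff in E2.
    pose proof (Hb2 b (Rle_refl _)).
    apply Rabs_def1; lra. }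
  apply ex_lim_seq_cauchy_corr in Hc. destruct Hc as [l Hl].
  assert (Hb : forall a b, 0 < a -> a <= 1 -> 1 <= b -> Rabs (RInt (gI y) a b - l) <= Rpower a y / y + D/(1+b)).
  { intros a b Ha Ha1 Hb. apply Rle_plus_epsilon. intros eps He.
    apply is_lim_seq_Reals in Hl. destruct (Hl (eps/2) ltac:(lra)) as [N1 HN1].
    destruct (choose_n D (eps/2) b HD ltac:(lra) ltac:(lra)) as [N2 [HN2 HN2']].
    set (n := Nat.max N1 N2).
    destruct (HN2' n ltac:(lia)) as [Hn1 Hn2].
    pose proof (Happ n a b ltac:(lia) Ha Ha1 Hb Hn1) as E1. apply abs_le_iff in E1.
    pose proof (HN1 n ltac:(lia)) as E2. unfold R_dist in E2. apply Rabs_def2 in E2.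
    apply abs_le_iff. lra. }
  assert (HG : is_RInt_gen (gI y) (at_right 0) (Rbar_locally p_infty) l).
  { intros Q [eps HQ]. pose proof (cond_pos eps) as He.
    destruct (choose_a y (eps/2) Hy ltac:(lra)) as [a0 [Ha1 Ha2]].
    destruct (choose_b D (eps/2) HD ltac:(lra)) as [b0 [Hb1 Hb2]].
    apply (Filter_prod _ _ _ (fun a => 0 < a < a0) (fun b => b0 < b)).
    - exists (mkposreal a0 (proj1 Ha1)). intros x Hx Hx0. simpl in Hx.
      unfold ball in Hx; simpl in Hx; unfold AbsRing_ball, abs, minus, plus, opp in Hx; simpl in Hx.
      rewrite Ropp_0, Rplus_0_r in Hx. apply Rabs_def2 in Hx. lra.
    - exists b0. auto.
    - intros a b Ha Hbb. simpl. exists (RInt (gI y) a b). split.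
      apply (RInt_correct (V:=R_CompleteNormedModule)). apply ex_g; lra.
      apply HQ. unfold ball; simpl; unfold AbsRing_ball, abs, minus, plus, opp; simpl.
      pose proof (Hb a b ltac:(lra) ltac:(lra) ltac:(lra)).
      assert (Rpower a y / y <= Rpower a0 y / y).
      { unfold Rdiv. apply Rmult_le_compat_r. left; apply Rinv_0_lt_compat; auto.
        apply Rle_Rpower_l; lra. }
      pose proof (Hb2 b ltac:(lra)). apply Rle_lt_trans with (Rpower a y / y + D / (1 + b)). auto. lra. }
  assert (HGam : Gamma y = l).
  { unfold Gamma. apply (is_RInt_gen_unique (V:=R_CompleteNormedModule)). exact HG. }
  rewrite HGam. split. auto.
  assert (HJ : 0 < RInt (gI y) 1 2).
  { apply RInt_gt_0. lra. intros z Hz. unfold gI. apply Rmult_lt_0_compat. apply Rpower_gt0. apply exp_pos.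
    intros z Hz. apply cont_g; lra. }
  destruct (choose_a y (RInt (gI y) 1 2 / 4) Hy ltac:(lra)) as [a [Ha1 Ha2]].
  destruct (choose_b D (RInt (gI y) 1 2 / 4) HD ltac:(lra)) as [b [Hb1 Hb2]].
  pose proof (Hb a b ltac:(lra) ltac:(lra) ltac:(lra)) as E. apply abs_le_iff in E.
  pose proof (Hb2 b (Rle_refl _)).
  assert (Hab : RInt (gI y) 1 2 <= RInt (gI y) a b).
  { assert (C1 := RInt_Chasles (V:=R_CompleteNormedModule) (gI y) a 1 b (ex_g y a 1 ltac:(lra) ltac:(lra)) (ex_g y 1 b ltac:(lra) ltac:(lra))).
    assert (C2 := RInt_Chasles (V:=R_CompleteNormedModule) (gI y) 1 2 b (ex_g y 1 2 ltac:(lra) ltac:(lra)) (ex_g y 2 b ltac:(lra) ltac:(lra))).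
    unfold plus in C1, C2; simpl in C1, C2.
    assert (0 <= RInt (gI y) a 1). { apply RInt_ge_0. lra. apply ex_g; lra. intros z Hz; unfold gI.
      left; apply Rmult_lt_0_compat. apply Rpower_gt0. apply exp_pos. }
    assert (0 <= RInt (gI y) 2 b). { apply RInt_ge_0. lra. apply ex_g; lra. intros z Hz; unfold gI.
      left; apply Rmult_lt_0_compat. apply Rpower_gt0. apply exp_pos. }
    lra. }
  lra.
Qed.

Fixpoint Rp (z : R) (n k : nat) : R := match k with
  | O => 1
  | S k' => Rp z n k' * ((INR n - INR k') / (z + INR n + INR k' + 1)) end.

Lemma Rp_bounds z n k : 0 < z -> (k <= n)%nat -> 0 < Rp z n k <= 1.
Proof. intros Hz. induction k; intros Hk. simpl; lra.
  simpl. destruct (IHk ltac:(lia)). apply lt_INR in Hk. pose proof (pos_INR k).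
  assert (0 < (INR n - INR k) / (z + INR n + INR k + 1) <= 1).
  { split. apply Rdiv_lt_0_compat; lra. apply Rmult_le_reg_r with (z + INR n + INR k + 1). lra.
    unfold Rdiv; rewrite Rmult_assoc, Rinv_l by lra. lra. }
  split. apply Rmult_lt_0_compat; lra. nra.
Qed.

Lemma Rp_id z n k : 0 < z -> (k <= n)%nat ->
  INR (fact (n-k)) * poch z (n+k+1) * Rp z n k = INR (fact n) * poch z (n+1).
Proof. intros Hz. induction k; intros Hk.
  - simpl. rewrite Nat.sub_0_r, Nat.add_0_r. ring.
  - assert (E : (n - k = S (n - S k))%nat) by lia.
    assert (E2 : (n + S k + 1 = S (n + k + 1))%nat) by lia.
    specialize (IHk ltac:(lia)). rewrite <- IHk. rewrite E2. rewrite E.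
    rewrite fact_simpl, mult_INR. cbn [poch Rp]. rewrite <- E. rewrite minus_INR by lia.
    rewrite !plus_INR. simpl (INR 1).
    pose proof (pos_INR n). pose proof (pos_INR k). field. lra.
Qed.

Lemma lim_inv_n : is_lim_seq (fun n => / INR n) 0.
Proof. replace (Finite 0) with (Rbar_inv p_infty) by reflexivity. apply is_lim_seq_inv.
  apply is_lim_seq_INR. discriminate. Qed.

Lemma Rp_lim z k : 0 < z -> is_lim_seq (fun n => Rp z n k) 1.
Proof. intros Hz. induction k.
  - simpl. apply is_lim_seq_const.
  - simpl. replace (Finite 1) with (Finite (1 * ((1 - INR k * 0) / (1 + (z + INR k + 1) * 0)))) by (f_equal; field).
    apply is_lim_seq_mult'. auto.
    apply is_lim_seq_ext_loc with (fun n => (1 - INR k * / INR n) / (1 + (z + INR k + 1) * / INR n)).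
    + exists 1%nat. intros n Hn. apply le_INR in Hn. simpl in Hn. field. pose proof (pos_INR k). lra.
    + apply is_lim_seq_div'. apply is_lim_seq_minus'. apply is_lim_seq_const.
      apply is_lim_seq_mult'. apply is_lim_seq_const. apply lim_inv_n.
      apply is_lim_seq_plus'. apply is_lim_seq_const.
      apply is_lim_seq_mult'. apply is_lim_seq_const. apply lim_inv_n.
      lra.
Qed.

Lemma is_lim_seq_sum_fin (u : nat -> nat -> R) (l : nat -> R) K :
  (forall k, is_lim_seq (fun n => u n k) (l k)) ->
  is_lim_seq (fun n => sum_n (fun k => u n k) K) (sum_n l K).
Proof. intros H. induction K.
  - rewrite sum_O. apply is_lim_seq_ext with (fun n => u n 0%nat). intros; rewrite sum_O; auto. auto.
  - rewrite sum_Sn. apply is_lim_seq_ext with (fun n => sum_n (fun k => u n k) K + u n (S K)).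
    intros; rewrite sum_Sn; auto. apply is_lim_seq_plus'; auto.
Qed.

Lemma sum_diff_le (f g : nat -> R) K d :
  (forall k, 0 <= f k <= g k) ->
  0 <= sum_n f (K + d) - sum_n f K <= sum_n g (K + d) - sum_n g K.
Proof. intros H. induction d.
  - rewrite Nat.add_0_r. lra.
  - replace (K + S d)%nat with (S (K + d)) by lia. rewrite !sum_Sn. unfold plus; simpl.
    specialize (H (S (K + d))). lra.
Qed.

Lemma partial_le_series (m : nat -> R) S n : (forall k, 0 <= m k) -> is_series m S -> sum_n m n <= S.
Proof. intros Hm Hs. apply is_series_Reals in Hs. apply Rle_plus_epsilon. intros eps He.
  destruct (Hs eps He) as [N HN]. specialize (HN (Nat.max N n) ltac:(lia)).
  unfold R_dist in HN. apply Rabs_def2 in HN. rewrite <- sum_n_Reals in HN.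
  pose proof (sum_diff_le m m n (Nat.max N n - n) ltac:(intros k; specialize (Hm k); lra)).
  replace (n + (Nat.max N n - n))%nat with (Nat.max N n) in H by lia. lra.
Qed.

Lemma dom_lim (m : nat -> R) (Rr : nat -> nat -> R) S :
  (forall k, 0 <= m k) -> is_series m S ->
  (forall n k, (k <= n)%nat -> 0 <= Rr n k <= 1) ->
  (forall k, is_lim_seq (fun n => Rr n k) 1) ->
  is_lim_seq (fun n => sum_n (fun k => m k * Rr n k) n) S.
Proof.
  intros Hm Hs HR HRl. apply is_lim_seq_Reals. intros eps He.
  pose proof Hs as Hs'. apply is_series_Reals in Hs'.
  destruct (Hs' (eps/2) ltac:(lra)) as [K HK]. specialize (HK K (le_n _)).
  rewrite <- sum_n_Reals in HK. unfold R_dist in HK. apply Rabs_def2 in HK.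
  pose proof (partial_le_series m S K Hm Hs) as HSK.
  assert (HV := is_lim_seq_sum_fin (fun n k => m k * Rr n k) (fun k => m k * 1) K
    (fun k => is_lim_seq_mult' _ _ _ _ (is_lim_seq_const (m k)) (HRl k))).
  apply is_lim_seq_Reals in HV. destruct (HV (eps/2) ltac:(lra)) as [N1 HN1].
  exists (Nat.max N1 K). intros n Hn. specialize (HN1 n ltac:(lia)). unfold R_dist in *.
  apply Rabs_def2 in HN1.
  assert (E : sum_n (fun k => m k * 1) K = sum_n m K) by (apply sum_n_ext; intros; simpl; rewrite Rmult_1_r; auto).
  rewrite E in HN1.
  set (f := fun k => if Nat.leb k n then m k * Rr n k else 0).
  assert (Hf : forall k, 0 <= f k <= m k).
  { intros k. unfold f. specialize (Hm k). destruct (Nat.leb k n) eqn:Hk.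
    apply Nat.leb_le in Hk. destruct (HR n k Hk). split; nra. lra. }
  assert (EU : sum_n (fun k => m k * Rr n k) n = sum_n f n).
  { apply sum_n_ext_loc. intros k Hk. unfold f. apply Nat.leb_le in Hk. rewrite Hk. auto. }
  assert (EV : sum_n (fun k => m k * Rr n k) K = sum_n f K).
  { apply sum_n_ext_loc. intros k Hk. unfold f. assert (k <= n)%nat by lia. apply Nat.leb_le in H. rewrite H. auto. }
  pose proof (sum_diff_le f m K (n - K) Hf) as D.
  replace (K + (n - K))%nat with n in D by lia.
  pose proof (partial_le_series m S n Hm Hs).
  rewrite EU. rewrite EV in HN1. apply Rabs_def1; lra.
Qed.

Lemma ln_ge_1_minus z : 0 < z -> 1 - / z <= ln z.
Proof. intros Hz. pose proof (one_plus_le_exp (ln (/ z))). rewrite exp_ln in H by (apply Rinv_0_lt_compat; auto).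
  rewrite ln_Rinv in H by auto. lra. Qed.

Lemma tele_ineq r u : 0 < r -> 1 <= u ->
  r * (Rpower (u+1) (- r) / (u+1)) <= Rpower u (- r) - Rpower (u+1) (- r).
Proof. intros Hr Hu.
  assert (HA : Rpower u (-r) = Rpower (u+1) (-r) * Rpower ((u+1)/u) r).
  { unfold Rpower. rewrite <- exp_plus. f_equal. rewrite ln_div by lra. ring. }
  assert (HL : 1 / (u+1) <= ln ((u+1)/u)).
  { pose proof (ln_ge_1_minus ((u+1)/u) ltac:(apply Rdiv_lt_0_compat; lra)).
    replace (1 - / ((u+1)/u)) with (1/(u+1)) in H by (field; lra). auto. }
  assert (HE : 1 + r / (u+1) <= Rpower ((u+1)/u) r).
  { unfold Rpower. apply Rle_trans with (1 + r * ln ((u+1)/u)). 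
    assert (r * (1/(u+1)) <= r * ln ((u+1)/u)) by (apply Rmult_le_compat_l; lra).
    unfold Rdiv in *. lra. apply one_plus_le_exp. }
  rewrite HA. pose proof (Rpower_gt0 (u+1) (-r)).
  assert (Rpower (u + 1) (- r) * (1 + r / (u+1)) <= Rpower (u + 1) (- r) * Rpower ((u + 1) / u) r)
    by (apply Rmult_le_compat_l; lra).
  replace (r * (Rpower (u + 1) (- r) / (u + 1))) with (Rpower (u + 1) (- r) * (1 + r / (u+1)) - Rpower (u+1) (-r)) by (field; lra).
  lra.
Qed.

Definition vS (s : R) (k : nat) := Rpower (INR k + 1) (- s).

Lemma vS_partial s n : 1 < s -> sum_f_R0 (vS s) n <= 1 + (1 - Rpower (INR n + 1) (1 - s)) / (s - 1).
Proof. intros Hs. induction n.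
  - simpl. unfold vS. simpl. rewrite Rplus_0_l, !Rpower_1_base. lra.
  - change (sum_f_R0 (vS s) (S n)) with (sum_f_R0 (vS s) n + vS s (S n)). unfold vS at 2. rewrite !S_INR.
    pose proof (tele_ineq (s-1) (INR n + 1) ltac:(lra) ltac:(pose proof (pos_INR n); lra)) as T.
    replace (- (s-1)) with (1 - s) in T by ring.
    assert (E : Rpower (INR n + 1 + 1) (- s) = Rpower (INR n + 1 + 1) (1 - s) / (INR n + 1 + 1)).
    { replace (1 - s) with (- s + 1) by ring. rewrite Rpower_plus, Rpower_1 by (pose proof (pos_INR n); lra).
      field. pose proof (pos_INR n); lra. }
    rewrite E. 
    assert ((s-1) * (Rpower (INR n + 1 + 1) (1 - s) / (INR n + 1 + 1)) / (s-1) =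
            Rpower (INR n + 1 + 1) (1 - s) / (INR n + 1 + 1)) by (field; split; [pose proof (pos_INR n)|]; lra).
    assert (Rpower (INR n + 1 + 1) (1 - s) / (INR n + 1 + 1) <=
      (Rpower (INR n + 1) (1 - s) - Rpower (INR n + 1 + 1) (1 - s)) / (s-1)).
    { rewrite <- H. unfold Rdiv at 1 3. apply Rmult_le_compat_r. left; apply Rinv_0_lt_compat; lra. auto. }
    unfold Rdiv in *. 
    replace ((1 - Rpower (INR n + 1 + 1) (1 - s)) * / (s - 1)) with
      ((1 - Rpower (INR n + 1) (1 - s)) * / (s - 1) + (Rpower (INR n + 1) (1 - s) - Rpower (INR n + 1 + 1) (1 - s)) * / (s - 1)) by ring.
    lra.
Qed.

Lemma ex_series_vS s : 1 < s -> ex_series (vS s).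
Proof. intros Hs. destruct (growing_cv (sum_f_R0 (vS s))) as [l Hl].
  - intros n. change (sum_f_R0 (vS s) (S n)) with (sum_f_R0 (vS s) n + vS s (S n)). pose proof (Rpower_gt0 (INR (S n) + 1) (- s)). unfold vS. lra.
  - exists (1 + 1 / (s-1)). intros x [n Hn]. subst x. eapply Rle_trans. apply vS_partial; auto.
    pose proof (Rpower_gt0 (INR n + 1) (1 - s)). unfold Rdiv.
    assert (0 < / (s-1)) by (apply Rinv_0_lt_compat; lra). nra.
  - exists l. apply is_series_Reals. exact Hl.
Qed.

Lemma ln_pow_bound q d : 0 < d -> exists A, 0 < A /\ forall z, 2 <= z -> Rpower (ln z) q <= A * Rpower z d.
Proof. intros Hd.
  assert (Hl2 : 0 < ln 2) by (rewrite <- ln_1; apply ln_increasing; lra).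
  destruct (Rle_dec q 0) as [Hq|Hq].
  - exists (Rpower (ln 2) q). split. apply Rpower_gt0. intros z Hz.
    assert (Hlz : ln 2 <= ln z) by (apply ln_le; lra).
    assert (Rpower (ln z) q <= Rpower (ln 2) q).
    { unfold Rpower. apply exp_le_3 || idtac.
      assert (ln (ln 2) <= ln (ln z)) by (apply ln_le; lra).
      destruct (Req_dec (q * ln (ln z)) (q * ln (ln 2))) as [E|E]. rewrite E; lra.
      left; apply exp_increasing. nra. }
    assert (1 <= Rpower z d). { rewrite <- (Rpower_O z) by lra. apply Rle_Rpower; lra. }
    pose proof (Rpower_gt0 (ln 2) q). nra.
  - exists (Rpower (q/d) q). split. apply Rpower_gt0. intros z Hz.
    set (w := Rpower z (d/q)).
    assert (Hw : 0 < w) by apply Rpower_gt0.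
    assert (Hlw : ln w = d/q * ln z) by (unfold w; apply ln_Rpower).
    assert (H1 : 1 + ln w <= w) by (pose proof (one_plus_le_exp (ln w)); rewrite exp_ln in H; auto).
    assert (Hlz : 0 < ln z) by (rewrite <- ln_1; apply ln_increasing; lra).
    assert (H2 : ln z <= q/d * w).
    { rewrite Hlw in H1. apply Rmult_le_reg_l with (d/q). apply Rdiv_lt_0_compat; lra.
      replace (d/q * (q/d * w)) with w by (field; lra). lra. }
    apply Rle_trans with (Rpower (q/d * w) q). apply Rle_Rpower_l; lra.
    rewrite <- Rpower_mult_distr by (try apply Rdiv_lt_0_compat; lra).
    unfold w. rewrite Rpower_mult. replace (d/q*q) with d by (field; lra). lra.
Qed.

Lemma M_summable (N a : nat) (eps p q C : R) (M : nat -> R)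
  (Ha : (1 <= a <= N)%nat) (Heps : 0 < eps) (Hp : 1 < p) (HC : 0 < C)
  (HM : forall k : nat,
      Rabs (M k) <
        C * Rpower (ln (INR N * INR k + INR N + INR a)) q / (natpow k p + eps)) :
  ex_series (fun k => Rabs (M k)).
Proof.
  set (d := (p - 1)/2). assert (Hd : 0 < d) by (unfold d; lra).
  destruct (ln_pow_bound q d Hd) as [A [HA HAb]].
  set (c0 := Rmin eps (Rpower 2 (-p))).
  assert (Hc0 : 0 < c0) by (apply Rmin_pos; [lra| apply Rpower_gt0]).
  assert (HNa : 1 <= INR a /\ INR a <= INR N /\ 1 <= INR N).
  { destruct Ha. split. apply (le_INR 1); auto. split. apply le_INR; auto. apply (le_INR 1); lia. }
  set (Dc := C * A * Rpower (2 * INR N) d / c0).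
  apply (ex_series_le (fun k => Rabs (M k)) (fun k => Dc * vS ((p+1)/2) k)).
  2: { apply ex_series_ext with (fun k => scal Dc (vS ((p+1)/2) k)). intros; reflexivity. apply (@ex_series_scal_l R_AbsRing R_CompleteNormedModule). apply ex_series_vS. lra. }
  intros k. unfold norm; simpl; unfold abs; simpl. rewrite Rabs_Rabsolu.
  left. eapply Rlt_le_trans. apply HM.
  pose proof (pos_INR k) as Hk.
  set (z := INR N * INR k + INR N + INR a).
  assert (Hz2 : 2 <= z) by (unfold z; nra).
  assert (Hz : z <= 2 * INR N * (INR k + 1)) by (unfold z; nra).
  assert (H1 : Rpower (ln z) q <= A * (Rpower (2 * INR N) d * Rpower (INR k + 1) d)).
  { eapply Rle_trans. apply HAb; auto. apply Rmult_le_compat_l. lra.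
    rewrite Rpower_mult_distr by lra. apply Rle_Rpower_l; lra. }
  assert (H2 : c0 * Rpower (INR k + 1) p <= natpow k p + eps).
  { destruct k.
    - simpl. rewrite Rplus_0_l, Rpower_1_base. unfold c0. pose proof (Rmin_l eps (Rpower 2 (-p))). lra.
    - unfold natpow. 
      assert (Rpower (INR (S k) + 1) p <= Rpower 2 p * Rpower (INR (S k)) p).
      { pose proof (lt_0_INR (S k) ltac:(lia)). rewrite Rpower_mult_distr by lra. apply Rle_Rpower_l. lra. rewrite S_INR in *. pose proof (pos_INR k). split; lra. }
      assert (c0 <= Rpower 2 (-p)) by apply Rmin_r.
      rewrite Rpower_Ropp in H0.
      pose proof (Rpower_gt0 2 p). pose proof (Rpower_gt0 (INR (S k) + 1) p). pose proof (Rpower_gt0 (INR (S k)) p).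
      assert (Hcc : c0 * Rpower (INR (S k) + 1) p <= / Rpower 2 p * (Rpower 2 p * Rpower (INR (S k)) p)).
      { apply Rle_trans with (/ Rpower 2 p * Rpower (INR (S k) + 1) p). apply Rmult_le_compat_r; lra.
        apply Rmult_le_compat_l; [left; apply Rinv_0_lt_compat|]; lra. }
      replace (/ Rpower 2 p * (Rpower 2 p * Rpower (INR (S k)) p)) with (Rpower (INR (S k)) p) in Hcc by (field; lra).
      lra. }
  unfold vS. replace (- ((p+1)/2)) with (d - p) by (unfold d; field).
  unfold Rminus. rewrite Rpower_plus, Rpower_Ropp.
  pose proof (Rpower_gt0 (INR k + 1) p). pose proof (Rpower_gt0 (INR k + 1) d).
  pose proof (Rpower_gt0 (2 * INR N) d). pose proof (Rpower_gt0 (ln z) q).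
  unfold Dc. apply Rle_trans with (C * (A * (Rpower (2 * INR N) d * Rpower (INR k + 1) d)) / (c0 * Rpower (INR k + 1) p)).
  - unfold Rdiv. apply Rmult_le_compat. nra. left; apply Rinv_0_lt_compat.
    assert (0 < natpow k p + eps) by nra. auto.
    apply Rmult_le_compat_l; lra. apply Rinv_le_contravar; nra.
  - right. field. lra.
Qed.

Theorem mainTheorem6 (N a : nat) (eps p q C : R) (M : nat -> R)
  (Ha : (1 <= a <= N)%nat) (Heps : 0 < eps) (Hp : 1 < p) (HC : 0 < C)
  (HM : forall k : nat,
      Rabs (M k) <
        C * Rpower (ln (INR N * INR k + INR N + INR a)) q / (natpow k p + eps)) :
  is_lim_seq
    (fun n : nat =>
       sum_n (fun k : nat =>
          Rabs (M k) * (INR N * (poch (INR a / INR N) (S n)) ^ 2)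
          / (INR (Factorial.fact (n - k)) * poch (2 * INR a / INR N) (n + k + 1))) n)
    (INR N / Beta (INR a / INR N) (INR a / INR N) * Series (fun k => Rabs (M k))).
Proof.
  assert (HNa : 1 <= INR a /\ 1 <= INR N).
  { destruct Ha. split; apply (le_INR 1); lia. }
  replace (2 * INR a / INR N) with (INR a / INR N + INR a / INR N) by (field; lra).
  set (x := INR a / INR N).
  assert (Hx : 0 < x) by (unfold x; apply Rdiv_lt_0_compat; lra).
  assert (Hx2 : 0 < x + x) by lra.
  pose proof (M_summable N a eps p q C M Ha Heps Hp HC HM) as Hex.
  apply Series_correct in Hex.
  destruct (gamma_lim x Hx) as [G1 G1p].
  destruct (gamma_lim (x+x) Hx2) as [G2 G2p].
  set (T0 := fun n => INR N * (poch x (S n))^2 / (INR (fact n) * poch (x+x) (S n))).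
  assert (HT0 : is_lim_seq T0 (INR N * Gamma (x+x) / (Gamma x * Gamma x))).
  { apply is_lim_seq_ext_loc with (fun n => INR N * P (x+x) n / (P x n * P x n)).
    - exists 1%nat. intros n Hn. unfold T0, P.
      assert (0 < INR n) by (apply lt_0_INR; lia).
      rewrite Rpower_plus.
      pose proof (poch_pos x (S n) Hx). pose proof (poch_pos (x+x) (S n) Hx2).
      pose proof (Rpower_gt0 (INR n) x). pose proof (INR_fact_lt_0 n).
      field. repeat split; lra.
    - apply is_lim_seq_div'. apply is_lim_seq_mult'. apply is_lim_seq_const. auto.
      apply is_lim_seq_mult'; auto. nra. }
  assert (HU : is_lim_seq (fun n => sum_n (fun k => Rabs (M k) * Rp (x+x) n k) n) (Series (fun k => Rabs (M k)))).
  { apply dom_lim. intros; apply Rabs_pos. auto.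
    intros n k Hk. pose proof (Rp_bounds (x+x) n k Hx2 Hk). lra.
    intros k. apply Rp_lim; auto. }
  pose proof (is_lim_seq_mult' _ _ _ _ HT0 HU) as Hlim.
  replace (INR N / Beta x x * Series (fun k => Rabs (M k))) with
    (INR N * Gamma (x + x) / (Gamma x * Gamma x) * Series (fun k => Rabs (M k))).
  2: { unfold Beta. field. repeat split; lra. }
  apply is_lim_seq_ext with (2 := Hlim). intros n.
  transitivity (sum_n (fun k => T0 n * (Rabs (M k) * Rp (x+x) n k)) n).
  { symmetry. apply (sum_n_mult_l (K:=R_Ring)). }
  apply sum_n_ext_loc. intros k Hk.
  pose proof (Rp_id (x+x) n k Hx2 Hk) as E.
  replace (n+1)%nat with (S n) in E by lia.
  pose proof (Rp_bounds (x+x) n k Hx2 Hk) as [Rp1 Rp2].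
  pose proof (poch_pos x (S n) Hx). pose proof (poch_pos (x+x) (S n) Hx2).
  pose proof (poch_pos (x+x) (n+k+1) Hx2). pose proof (INR_fact_lt_0 n). pose proof (INR_fact_lt_0 (n-k)).
  unfold T0. match goal with |- ?A = ?B => change (@eq R A B) end.
  replace (INR (fact (n - k)) * poch (x + x) (n + k + 1)) with (INR (fact n) * poch (x + x) (S n) / Rp (x+x) n k)
    by (rewrite <- E; field; lra).
  field. repeat split; lra.
Qed.
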